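(* Let $k\ge 0$, $d\ge1$. A vector $\mathfrak{c}=(c_1,\ldots,c_d)\in\mathbb{N}^d$ is the clique vector of a $k$-connected threshold graph if and only if the vector $\mathfrak{b}=(b_1,\ldots,b_d)$ defined by \[ \sum_{i=1}^d b_i x^{i-1}=\sum_{i=1}^d c_i (x-1)^{i-1} \] has positive components, $d\ge k$, and $b_1=b_2=\cdots=b_k=1$.
   Context: For a graph $G$, $S(G)$ is obtained by adding a new vertex adjacent to all vertices of $G$, and $D(G)$ by adding a new isolated vertex. A threshold graph is a graph obtainable from the graph with no vertices by a finite sequence of $S$- and $D$-operations (with the first operation applied to the empty graph being $S$). The clique vector $(c_1,\ldots,c_d)$ of a graph records the number $c_i$ of cliques with exactly $i$ vertices, $d$ being the largest size of a clique. A graph is $k$-connected if it has at least $k$ vertices and removing any set of fewer than $k$ vertices leaves a connected graph; every graph is $0$-connected. *)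

(* Defs.v *)
From HB Require Import structures.
From mathcomp Require Import all_boot all_order all_algebra.
Set Implicit Arguments. Unset Strict Implicit. Unset Printing Implicit Defensive.
Import GRing.Theory.

(* A finite simple graph on vertex set 'I_n (adjacency assumed symmetric and
   irreflexive; all graphs built below are). *)
Record graph := Graph { gn : nat; gadj : rel 'I_gn }.

Definition empty_graph : graph := @Graph 0 (fun _ _ => false).

(* ext true G = S(G) : new vertex (ord_max) adjacent to all old vertices;
   ext false G = D(G) : new isolated vertex. *)
Definition ext (b : bool) (G : graph) : graph :=
  @Graph (gn G).+1 (fun x y : 'I_(gn G).+1 =>
    match (insub (val x) : option 'I_(gn G)), (insub (val y) : option 'I_(gn G)) with
    | Some a, Some a' => gadj a a'
    | None, Some _ | Some _, None => b
    | None, None => false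
    end).

Definition build (s : seq bool) : graph := foldl (fun G b => ext b G) empty_graph s.

(* s is a valid threshold-graph construction sequence: nonempty, first op S. *)
Definition threshold_seq (s : seq bool) : bool := head false s.

Definition clique (G : graph) (A : {set 'I_(gn G)}) : bool :=
  [forall x in A, forall y in A, (x != y) ==> gadj x y].

Definition clique_number (G : graph) : nat :=
  \max_(A : {set 'I_(gn G)} | clique A) #|A|.

Definition nb_cliques (G : graph) (i : nat) : nat :=
  #|[set A : {set 'I_(gn G)} | clique A & #|A| == i]|.

Definition clique_vector (G : graph) : seq nat :=
  [seq nb_cliques G i | i <- iota 1 (clique_number G)].

Definition connected_outside (G : graph) (S : {set 'I_(gn G)}) : Prop :=
  forall x y, x \notin S -> y \notin S ->
    connect [rel u v | [&& u \notin S, v \notin S & gadj u v]] x y.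

Definition k_connected (k : nat) (G : graph) : Prop :=
  k <= gn G /\ forall S : {set 'I_(gn G)}, #|S| < k -> connected_outside S.

(* sum_{i=1}^d c_i (x-1)^{i-1}, as an integer polynomial; its coefficient of
   x^(i-1) is b_i. *)
Definition cpoly (c : seq nat) : {poly int} :=
  (\sum_(i < size c) ((nth 0%N c i)%:R)%:P * ('X - 1) ^+ i)%R.

Definition bvec (c : seq nat) (i : nat) : int := ((cpoly c)`_i)%R.

(* Main.v *)
Require Import Defs.
From HB Require Import structures.
From mathcomp Require Import all_boot all_order all_algebra.
From mathcomp Require Import zify ring.
Set Implicit Arguments. Unset Strict Implicit. Unset Printing Implicit Defensive.
Import GRing.Theory Num.Theory.

Local Close Scope ring_scope.

Section Ext.
Variable G : graph.
Local Notation n := (gn G).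
Definition lf (a : 'I_n) : 'I_n.+1 := lift ord_max a.
Definition pre (A : {set 'I_n.+1}) : {set 'I_n} := [set a | lf a \in A].
Definition g0 (X : {set 'I_n}) : {set 'I_n.+1} := lf @: X.
Definition g1 (X : {set 'I_n}) : {set 'I_n.+1} := ord_max |: lf @: X.

Lemma lf_inj : injective lf. Proof. exact: lift_inj. Qed.
Lemma lf_neq a : (lf a == ord_max) = false.
Proof. by apply/negbTE; rewrite eq_sym neq_lift. Qed.

Lemma insub_lf a : (insub (val (lf a)) : option 'I_n) = Some a.
Proof. have -> : val (lf a) = val a by exact: lift_max. by rewrite valK. Qed.
Lemma insub_max : (insub (val (@ord_max n)) : option 'I_n) = None.
Proof. by rewrite insubN //= ltnn. Qed.

Variable b : bool.
Lemma adj_ll a a' : @gadj (ext b G) (lf a) (lf a') = gadj a a'.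
Proof. by rewrite /= !insub_lf. Qed.
Lemma adj_lm a : @gadj (ext b G) (lf a) ord_max = b.
Proof. by rewrite /= insub_lf insub_max. Qed.
Lemma adj_ml a : @gadj (ext b G) ord_max (lf a) = b.
Proof. by rewrite /= insub_lf insub_max. Qed.
Lemma adj_mm : @gadj (ext b G) ord_max ord_max = false.
Proof. by rewrite /= insub_max. Qed.

Lemma caseI (x : 'I_n.+1) : x = ord_max \/ exists a, x = lf a.
Proof. by case: (unliftP ord_max x) => [j ->|->]; [right; exists j|left]. Qed.

Lemma notmax_g0 X : ord_max \notin g0 X.
Proof. by apply/imsetP => [[a _ /esym/eqP]]; rewrite lf_neq. Qed.
Lemma lf_g0 X a : (lf a \in g0 X) = (a \in X).
Proof. exact/mem_imset/lf_inj. Qed.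
Lemma lf_g1 X a : (lf a \in g1 X) = (a \in X).
Proof. by rewrite /g1 in_setU1 lf_neq lf_g0. Qed.
Lemma max_g1 X : ord_max \in g1 X.
Proof. by rewrite /g1 setU11. Qed.
Lemma pre_g0 X : pre (g0 X) = X.
Proof. by apply/setP => a; rewrite inE lf_g0. Qed.
Lemma pre_g1 X : pre (g1 X) = X.
Proof. by apply/setP => a; rewrite inE lf_g1. Qed.
Lemma g0_pre (A : {set 'I_n.+1}) : ord_max \notin A -> g0 (pre A) = A.
Proof.
move=> hA; apply/setP => x; case: (caseI x) => [->|[a ->]].
  by rewrite (negbTE (notmax_g0 _)) (negbTE hA).
by rewrite lf_g0 inE.
Qed.
Lemma g1_pre (A : {set 'I_n.+1}) : ord_max \in A -> g1 (pre A) = A.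
Proof.
move=> hA; apply/setP => x; case: (caseI x) => [->|[a ->]].
  by rewrite max_g1 hA.
by rewrite lf_g1 inE.
Qed.
Lemma card_g0 X : #|g0 X| = #|X|.
Proof. exact/card_imset/lf_inj. Qed.
Lemma card_g1 X : #|g1 X| = #|X|.+1.
Proof. by rewrite /g1 cardsU1 (notmax_g0 X) card_g0. Qed.

Lemma cliqueP (H : graph) (A : {set 'I_(gn H)}) :
  reflect (forall x y, x \in A -> y \in A -> x != y -> gadj x y) (clique A).
Proof.
apply: (iffP idP) => [/forall_inP h x y xA yA nxy | h].
  by have /forall_inP /(_ y yA) /implyP := h x xA; apply.
apply/forall_inP => x xA; apply/forall_inP => y yA; apply/implyP; exact: h.
Qed.

Lemma clique_g0 X : @clique (ext b G) (g0 X) = clique X.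
Proof.
apply/cliqueP/cliqueP => h.
  move=> x y xX yX nxy; rewrite -adj_ll; apply: h; rewrite ?lf_g0 //.
  by apply: contra nxy => /eqP /lf_inj ->.
move=> x y; case: (caseI x) => [->|[a ->]]; first by rewrite (negbTE (notmax_g0 _)).
case: (caseI y) => [->|[a' ->]]; first by rewrite (negbTE (notmax_g0 _)).
rewrite !lf_g0 adj_ll => aX aX' na; apply: h => //.
by apply: contra na => /eqP ->.
Qed.

Lemma clique_g1 X : @clique (ext b G) (g1 X) = clique X && (b || (X == set0)).
Proof.
apply/cliqueP/andP => h.
  split.
    apply/cliqueP => x y xX yX nxy; rewrite -adj_ll; apply: h; rewrite ?lf_g1 //.
    by apply: contra nxy => /eqP /lf_inj ->.
  case: (set_0Vmem X) => [->|[a aX]]; first by rewrite eqxx orbT.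
  by have := h ord_max (lf a) (max_g1 _); rewrite lf_g1 adj_ml eq_sym lf_neq => ->.
case: h => /cliqueP hX hb.
have hb' a : a \in X -> b.
  by move=> aX; case/orP: hb => // /eqP hX0; move: aX; rewrite hX0 inE.
move=> x y; case: (caseI x) => [->|[a ->]]; case: (caseI y) => [->|[a' ->]].
- by rewrite eqxx.
- by rewrite lf_g1 adj_ml => _ /hb'.
- by rewrite lf_g1 adj_lm => /hb'.
rewrite !lf_g1 adj_ll => aX aX' na; apply: hX => //.
by apply: contra na => /eqP ->.
Qed.
End Ext.

Local Close Scope ring_scope.

Lemma nb_ext b G i : nb_cliques (ext b G) i.+1 = nb_cliques G i.+1 +
  #|[set X : {set 'I_(gn G)} | [&& clique X, b || (X == set0) & #|X| == i]]|.
Proof.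
rewrite /nb_cliques -(cardsID [set A : {set 'I_(gn G).+1} | ord_max \in A]) addnC.
have i0 : injective (g0 (G:=G)) by exact: can_inj (@pre_g0 G).
have i1 : injective (g1 (G:=G)) by exact: can_inj (@pre_g1 G).
have E2 : [set A : {set 'I_(gn G).+1} | @clique (ext b G) A & #|A| == i.+1] :\: [set A : {set 'I_(gn G).+1} | ord_max \in A]
   = (g0 (G:=G)) @: [set X | clique X & #|X| == i.+1].
  apply/setP => A; rewrite !inE.
  case hA: (ord_max \in A) => /=.
    by apply/esym/imsetP => [[X _ hAX]]; move: hA; rewrite hAX (negbTE (notmax_g0 _)).
  by rewrite -(g0_pre (negbT hA)) (mem_imset _ _ i0) clique_g0 card_g0 inE.
have E1 : [set A : {set 'I_(gn G).+1} | @clique (ext b G) A & #|A| == i.+1] :&: [set A : {set 'I_(gn G).+1} | ord_max \in A]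
   = (g1 (G:=G)) @: [set X | [&& clique X, b || (X == set0) & #|X| == i]].
  apply/setP => A; rewrite !inE.
  case hA: (ord_max \in A) => /=.
    rewrite -(g1_pre hA) (mem_imset _ _ i1) clique_g1 card_g1 inE eqSS andbT.
    by case: (clique _); case: (_ || _).
  by rewrite andbF; apply/esym/imsetP => [[X _ hAX]]; move: hA; rewrite hAX max_g1.
by rewrite E1 E2 !card_imset.
Qed.

Lemma nb0 G : nb_cliques G 0 = 1.
Proof.
rewrite /nb_cliques -(cards1 (@set0 'I_(gn G))).
have -> : [set A : {set 'I_(gn G)} | clique A & #|A| == 0] = [set set0]; last by [].
apply/setP => A; rewrite !inE cards_eq0 andbC; case: eqP => // ->.
by apply/cliqueP => x y; rewrite inE.
Qed.

Lemma nb_ext_true G i : nb_cliques (ext true G) i.+1 = nb_cliques G i.+1 + nb_cliques G i.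
Proof. by rewrite nb_ext. Qed.

Lemma nb_ext_false G i : nb_cliques (ext false G) i.+1 = nb_cliques G i.+1 + (i == 0).
Proof.
rewrite nb_ext; congr (_ + _).
case: i => [|i] /=.
  rewrite -(cards1 (@set0 'I_(gn G))).
  have -> : [set X : {set 'I_(gn G)} | [&& clique X, false || (X == set0) & #|X| == 0]] = [set set0]; last by [].
  apply/setP => A; rewrite !inE cards_eq0 /=. case: eqP => [->|] /=; last by rewrite andbF.
  by rewrite andbT; apply/cliqueP => x y; rewrite inE.
apply/eqP; rewrite cards_eq0; apply/eqP/setP => A; rewrite !inE /=.
by case: eqP => [->|]; rewrite ?cards0 ?andbF.
Qed.

Lemma build_rcons s b : build (rcons s b) = ext b (build s).
Proof. by rewrite /build foldl_rcons. Qed.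

Lemma gn_build s : gn (build s) = size s.
Proof. by elim/last_ind: s => [|s b IH] //; rewrite build_rcons /= IH size_rcons. Qed.

Definition Dn (s : seq bool) : nat := foldl (fun d b => if b then d.+1 else maxn d 1) 0 s.
Definition Qp (s : seq bool) : {poly int} :=
  foldl (fun q (b : bool) => if b then (q * 'X + 1)%R else (q + 1)%R) 0%R s.
Definition kap (s : seq bool) : nat := foldl (fun k (b : bool) => if b then k.+1 else 0) 0 s.

Lemma Dn_rcons s b : Dn (rcons s b) = if b then (Dn s).+1 else maxn (Dn s) 1.
Proof. by rewrite /Dn foldl_rcons. Qed.
Lemma Qp_rcons s b : Qp (rcons s b) = if b then (Qp s * 'X + 1)%R else (Qp s + 1)%R.
Proof. by rewrite /Qp foldl_rcons. Qed.
Lemma kap_rcons s b : kap (rcons s b) = if b then (kap s).+1 else 0.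
Proof. by rewrite /kap foldl_rcons. Qed.

Lemma nb_empty i : nb_cliques empty_graph i.+1 = 0.
Proof.
apply/eqP; rewrite cards_eq0; apply/eqP/setP => A; rewrite !inE.
by have := max_card (mem A); rewrite card_ord leqn0 => /eqP ->; rewrite andbF.
Qed.

Lemma F2 s : (forall i, Dn s < i -> nb_cliques (build s) i = 0) /\ 0 < nb_cliques (build s) (Dn s).
Proof.
elim/last_ind: s => [|s b [IH1 IH2]].
  by split; [case=> // i _; exact: nb_empty | rewrite /= nb0].
rewrite build_rcons Dn_rcons; case: b.
  split; first by case=> // i hi; rewrite nb_ext_true (IH1 i.+1) ?(IH1 i); lia.
  by rewrite nb_ext_true addn_gt0 IH2 orbT.
split.
  case=> // i hi; rewrite nb_ext_false IH1; last by lia.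
  by case: i hi => [|i] hi //=; lia.
case hD: (Dn s) IH2 => [|d] IH2; first by rewrite /maxn /= nb_ext_false addn1.
by rewrite /maxn /= nb_ext_false addn_gt0 IH2.
Qed.

Lemma cn_build s : clique_number (build s) = Dn s.
Proof.
have [h1 h2] := F2 s.
apply/eqP; rewrite eqn_leq; apply/andP; split.
  apply/bigmax_leqP => A cA; rewrite leqNgt; apply/negP => /h1.
  rewrite /nb_cliques => /eqP; rewrite cards_eq0 => /eqP /setP /(_ A).
  by rewrite !inE cA eqxx.
move: h2; rewrite /nb_cliques card_gt0 => /set0Pn [A]; rewrite inE => /andP [cA /eqP <-].
exact: leq_bigmax_cond.
Qed.

Local Close Scope ring_scope.
Local Open Scope ring_scope.

Lemma F3 s N : (Dn s <= N)%N ->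
  \sum_(i < N) ((nb_cliques (build s) i.+1)%:R : int)%:P * ('X - 1) ^+ i = Qp s.
Proof.
elim/last_ind: s N => [|s b IH] N hN.
  by rewrite big1 // => i _; rewrite nb_empty mul0r.
move: hN; rewrite build_rcons Dn_rcons Qp_rcons; case: b => hN.
  case: N hN => [//|N] hN.
  under eq_bigr do rewrite nb_ext_true natrD polyCD mulrDl.
  rewrite big_split /= IH; last by lia.
  rewrite big_ord_recl /= nb0 expr0 mulr1.
  under eq_bigr do rewrite exprS mulrCA.
  rewrite -mulr_sumr IH; last by lia.
  ring.
case: N hN => [|N] hN; first by lia.
under eq_bigr do rewrite nb_ext_false natrD polyCD mulrDl.
rewrite big_split /= IH; last by lia.
rewrite big_ord_recl /= expr0 mulr1 big1 ?addr0 //.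
by move=> i _; rewrite mul0r.
Qed.

Local Close Scope ring_scope.

Lemma connect_map (T T' : finType) (e : rel T) (e' : rel T') (f : T -> T') :
  (forall x y, e x y -> e' (f x) (f y)) -> forall x y, connect e x y -> connect e' (f x) (f y).
Proof.
move=> H x y /connectP [p pth ->]; elim: p x pth => [|z p IH] x /=; first by rewrite connect0.
by case/andP => exz pz; apply: connect_trans (connect1 (H _ _ exz)) (IH _ pz).
Qed.

Lemma k_conn0 G : k_connected 0 G.
Proof. by split. Qed.

Lemma E2 G k : (0 < gn G)%N -> k_connected k (ext false G) -> k = 0%N.
Proof.
move=> hn [hk hS]; case: k hk hS => // k _ hS.
have h0 : (#|@set0 'I_(gn G).+1| < k.+1)%N by rewrite cards0.
have := hS set0 h0 ord_max (lf (Ordinal hn)).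
rewrite !inE => /(_ isT isT) /connectP [[|z p] pth].
  by move=> /= hl; have := lf_neq (Ordinal hn); rewrite -hl eqxx.
case/andP: pth => h _; case/and3P: h => _ _.
by case: (caseI z) => [->|[a ->]]; rewrite ?adj_mm ?adj_ml.
Qed.

Lemma E1 G k : k_connected k.+1 (ext true G) <-> k_connected k G.
Proof.
split => [[hk hS] | [hk hS]].
  split; first by [].
  move=> S' hS' a a' aS aS'.
  have h1 : (#|g1 S'| < k.+1)%N by rewrite card_g1.
  have h2 : lf a \notin g1 S' by rewrite lf_g1.
  have h3 : lf a' \notin g1 S' by rewrite lf_g1.
  have hc := hS (g1 S') h1 (lf a) (lf a') h2 h3.
  pose p (x : 'I_(gn G).+1) := odflt a (unlift ord_max x).
  have pK u : p (lf u) = u by rewrite /p /lf liftK.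
  rewrite -(pK a) -(pK a'); apply: (connect_map _ hc) => u v /and3P [hu hv].
  case: (caseI u) hu => [->|[u0 ->]]; first by rewrite max_g1.
  case: (caseI v) hv => [->|[v0 ->]]; first by rewrite max_g1.
  by rewrite !lf_g1 adj_ll !pK => hu hv huv; apply/and3P.
split; first by [].
move=> S hS' x y xS yS.
case hm: (ord_max \in S).
  have eS := g1_pre hm.
  move: hS'; rewrite -eS card_g1 ltnS => hS'.
  case: (caseI x) xS => [->|[a ->]]; first by rewrite hm.
  case: (caseI y) yS => [->|[a' ->]]; first by rewrite hm.
  move=> aS aS'.
  have aS1 : a \notin pre S by rewrite inE.
  have aS1' : a' \notin pre S by rewrite inE.
  apply: (connect_map _ (hS _ hS' _ _ aS1 aS1')) => u v /and3P [hu hv huv].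
  apply/and3P; split; [by rewrite lf_g1 | by rewrite lf_g1 | by rewrite (@adj_ll G true)].
have hx z : z \notin S -> connect [rel u v | [&& u \notin S, v \notin S & @gadj (ext true G) u v]] z ord_max.
  move=> zS; case: (caseI z) zS => [->|[a ->]] aS; first by rewrite connect0.
  by apply: connect1; apply/and3P; rewrite aS hm adj_lm.
have hy z : z \notin S -> connect [rel u v | [&& u \notin S, v \notin S & @gadj (ext true G) u v]] ord_max z.
  move=> zS; case: (caseI z) zS => [->|[a ->]] aS; first by rewrite connect0.
  by apply: connect1; apply/and3P; rewrite aS hm adj_ml.
exact: connect_trans (hx _ xS) (hy _ yS).
Qed.

Lemma k_conn_empty k : k_connected k empty_graph <-> k = 0%N.
Proof.
split => [[hk _]|->]; first by move: hk; rewrite leqn0 => /eqP.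
exact: k_conn0.
Qed.

Lemma KC s k : (s == [::]) || threshold_seq s -> k_connected k (build s) <-> (k <= kap s)%N.
Proof.
elim/last_ind: s k => [|s b IH] k hs.
  by rewrite k_conn_empty /kap /=; case: k.
rewrite build_rcons kap_rcons; case: b hs => hs.
  have hs' : (s == [::]) || threshold_seq s.
    by case: s {IH} hs.
  case: k => [|k]; first by split => // _; exact: k_conn0.
  by rewrite E1 IH.
have hn : (0 < gn (build s))%N.
  by rewrite gn_build; case: s {IH} hs.
split => [/(E2 hn) -> //| ]; rewrite leqn0 => /eqP ->; exact: k_conn0.
Qed.

Local Close Scope ring_scope.
Local Open Scope ring_scope.

Lemma head_rcons (s : seq bool) b : s != [::] -> threshold_seq (rcons s b) = threshold_seq s.
Proof. by case: s. Qed.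

Lemma Inv s : threshold_seq s ->
  [/\ (1 <= Dn s)%N, (forall j, (j < Dn s)%N -> 0 < (Qp s)`_j), (kap s <= Dn s)%N,
      (forall j, (j < kap s)%N -> (Qp s)`_j = 1) & ((kap s < Dn s)%N -> (Qp s)`_(kap s) != 1)].
Proof.
elim/last_ind: s => [//|s b IH] hs.
have [e | s0] := eqVneq s [::].
  subst s; move: hs; rewrite /threshold_seq /= => -> /=.
  rewrite /Dn /Qp /kap /=; split => //; first by case=> //; rewrite mul0r add0r coef1.
  by case => //; rewrite mul0r add0r coef1.
rewrite head_rcons // in hs.
have [h1 h2 h3 h4 h5] := IH hs.
rewrite Dn_rcons Qp_rcons kap_rcons; case: b.
  split => //.
  - by case => [|j] hj; rewrite coefD coefMX coef1 /= ?addr0 ?add0r // h2.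
  - by case => [|j] hj; rewrite coefD coefMX coef1 /= ?addr0 ?add0r // h4.
  - by rewrite coefD coefMX coef1 /= addr0.
have -> : maxn (Dn s) 1 = Dn s by lia.
split => //.
- by case => [|j] hj; rewrite coefD coef1 /= ?addr0; [apply: ltr_wpDr; last exact: h2 | exact: h2].
- by move=> _; rewrite coefD coef1 /= -subr_eq0 addrK; have := h2 0%N h1; rewrite lt0r => /andP [].
Qed.

Lemma Qp_nseq s m : Qp (s ++ nseq m false) = Qp s + m%:R.
Proof.
elim: m s => [|m IH] s; first by rewrite cats0 addr0.
by rewrite /= -cat_rcons IH Qp_rcons mulrS addrA.
Qed.

Lemma Dn_nseq s m : (1 <= Dn s)%N -> Dn (s ++ nseq m false) = Dn s.
Proof.
elim: m s => [|m IH] s hs; first by rewrite cats0.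
rewrite /= -cat_rcons IH Dn_rcons /=; lia.
Qed.

Lemma R3 (bs : seq int) : all (fun x => 0 < x) bs -> exists s,
  [/\ bs = [::] -> s = [::], bs != [::] -> threshold_seq s, Qp s = Poly bs & Dn s = size bs].
Proof.
elim: bs => [|b bs IH] /=; first by exists [::].
case/andP => hb /IH [s' [e1 e2 e3 e4]].
case: b hb => [[|m]|m] // _.
exists (rcons s' true ++ nseq m false); split => //.
- move=> _; case: s' e1 e2 {e3 e4} => [|x s'] e1 e2 //.
  by case: bs e1 e2 {IH} => [/(_ erefl) //| y bs] _ /(_ isT).
- by rewrite Qp_nseq Qp_rcons e3 /= cons_poly_def -natz polyC_natr mulrS addrA.
- by rewrite Dn_nseq Dn_rcons e4.
Qed.

Local Close Scope ring_scope.
Local Open Scope ring_scope.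

Lemma SB c j : (size c <= j)%N -> (cpoly c)`_j = 0.
Proof.
move=> hj; rewrite /cpoly coef_sum big1 // => i _; rewrite coefCM.
have : (size (('X - (1 : int)%:P) ^+ i) <= j)%N.
  by rewrite size_exp_XsubC; exact: leq_trans (ltn_ord i) hj.
by rewrite polyC1 => /(nth_default 0) ->; rewrite mulr0.
Qed.

Lemma cpoly_comp c : cpoly c \Po ('X + 1) = \poly_(i < size c) ((nth 0%N c i)%:R : int).
Proof.
rewrite /cpoly poly_def rmorph_sum /=; apply: eq_bigr => i _.
rewrite comp_polyM comp_polyC rmorphXn /= comp_polyB comp_polyX -polyC1 comp_polyC polyC1 addrK.
by rewrite mul_polyC.
Qed.

Lemma INJ c1 c2 : size c1 = size c2 -> cpoly c1 = cpoly c2 -> c1 = c2.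
Proof.
move=> hs he; apply: (@eq_from_nth _ 0%N) => // j hj.
have := congr1 (fun p => (p \Po ('X + 1))`_j) he; rewrite /= !cpoly_comp !coef_poly -hs hj.
by move/eqP; rewrite eqr_nat => /eqP.
Qed.

Lemma cpoly_build s : cpoly (clique_vector (build s)) = Qp s.
Proof.
rewrite -(F3 (leqnn (Dn s))) /cpoly /clique_vector size_map size_iota cn_build.
apply: eq_bigr => i _; rewrite (nth_map 0%N); last by rewrite size_iota.
by rewrite nth_iota.
Qed.

Lemma size_cv s : size (clique_vector (build s)) = Dn s.
Proof. by rewrite size_map size_iota cn_build. Qed.

Local Close Scope ring_scope.

Theorem corollary2p3 (k d : nat) (c : seq nat) :
  1 <= d -> size c = d ->
  ((exists s : seq bool,
      threshold_seq s /\ k_connected k (build s) /\ clique_vector (build s) = c)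
   <->
   ((forall i, i < d -> (0 < bvec c i)%R) /\ k <= d /\
    (forall i, i < k -> bvec c i = 1%R))).
Proof.
move=> hd hsz; split.
  case=> s [hs [hk hc]].
  have [h1 h2 h3 h4 h5] := Inv hs.
  have eD : Dn s = d by rewrite -size_cv hc.
  have eb i : bvec c i = ((Qp s)`_i)%R by rewrite /bvec -hc cpoly_build.
  have hk' : (k <= kap s)%N by apply/KC => //; rewrite hs orbT.
  split; first by move=> i hi; rewrite eb h2 // eD.
  split; first by rewrite -eD; apply: leq_trans hk' h3.
  by move=> i hi; rewrite eb h4 //; apply: leq_trans hi hk'.
case=> hb [hkd hk1].
pose bs := [seq bvec c j | j <- iota 0 d].
have hall : all (fun x => 0 < x)%R bs.
  by apply/allP => x /mapP [j]; rewrite mem_iota add0n => /andP [_ hj] ->; apply: hb.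
have [s [_ e2 e3 e4]] := R3 hall.
have bsn : bs != [::] by rewrite /bs; case: d hd {hsz hb hkd hk1 hall e2 e3 e4 bs}.
have hs := e2 bsn.
have eD : Dn s = d by rewrite e4 size_map size_iota.
have ePc : Poly bs = cpoly c.
  apply/polyP => j; rewrite coef_Poly.
  case: (ltnP j d) => hj.
    by rewrite (nth_map 0%N) ?size_iota // nth_iota.
  by rewrite nth_default ?size_map ?size_iota // SB // hsz.
have hcv : clique_vector (build s) = c.
  by apply: INJ; [rewrite size_cv eD hsz | rewrite cpoly_build e3 ePc].
have [h1 h2 h3 h4 h5] := Inv hs.
have eb i : bvec c i = ((Qp s)`_i)%R by rewrite /bvec -hcv cpoly_build.
exists s; split => //; split => //.
apply/KC; first by rewrite hs orbT.
rewrite leqNgt; apply/negP => hlt.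
have : (kap s < Dn s)%N by rewrite eD; apply: leq_trans hlt hkd.
by move/h5; rewrite -eb hk1 ?eqxx.
Qed.
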